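(* The word complexity function $\mathcal{C}$ of $\mathrm{Sub}_\tau$ satisfies $\mathcal{C}(1)=4$, $\mathcal{C}(2)=6$, $\mathcal{C}(3)=8$. Moreover, for every integer $n\geq 2$ and every $L=2^n+k$ with $0\le k<2^n$, $$\mathcal{C}(L)=\begin{cases} 2^{n+1}+2^{n-1}+3k, & 0\le k<2^{n-1},\\ 2^{n+1}+2^{n}+2k, & 2^{n-1}\le k<2^{n}.\end{cases}$$
   Context: Let $\mathcal{A}=\{a,x,y,z\}$ and let $\tau$ be the substitution (monoid morphism on finite words over $\mathcal{A}$) defined by $\tau(a)=axa$, $\tau(x)=y$, $\tau(y)=z$, $\tau(z)=x$. For a finite word $w$, $\mathrm{Sub}(w)$ denotes the set of finite (contiguous) subwords of $w$. Let $\mathrm{Sub}_\tau=\bigcup_{s\in\mathcal{A},\,n\in\mathbb{N}\cup\{0\}}\mathrm{Sub}(\tau^n(s))$. The word complexity is $\mathcal{C}(L)=$ the number of elements of $\mathrm{Sub}_\tau$ of length $L$. *)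

(* Defs.v *)
From HB Require Import structures.
From mathcomp Require Import all_boot.
From Stdlib Require Import Classical ClassicalEpsilon.
Set Implicit Arguments. Unset Strict Implicit. Unset Printing Implicit Defensive.

Inductive letter := La | Lx | Ly | Lz.

Definition letter_to_ord (c : letter) : 'I_4 :=
  match c with La => inord 0 | Lx => inord 1 | Ly => inord 2 | Lz => inord 3 end.
Definition ord_to_letter (i : 'I_4) : letter :=
  match val i with 0 => La | 1 => Lx | 2 => Ly | _ => Lz end.
Lemma letter_to_ordK : cancel letter_to_ord ord_to_letter.
Proof. by case; rewrite /ord_to_letter /= inordK. Qed.

HB.instance Definition _ := Finite.copy letter (can_type letter_to_ordK).

Definition tau_letter (c : letter) : seq letter :=
  match c with
  | La => [:: La; Lx; La]
  | Lx => [:: Ly]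
  | Ly => [:: Lz]
  | Lz => [:: Lx]
  end.

Definition tau (w : seq letter) : seq letter := flatten (map tau_letter w).

Definition in_Sub_tau (w : seq letter) : Prop :=
  exists (s : letter) (n : nat), infix w (iter n tau [:: s]).

Definition asbool (P : Prop) : bool :=
  if excluded_middle_informative P then true else false.

Definition complexity (L : nat) : nat :=
  #|[pred w : L.-tuple letter | asbool (in_Sub_tau (tval w))]|.

(* Main.v *)
Require Import Defs.
From mathcomp Require Import all_boot zify.
From Stdlib Require Import Classical ClassicalEpsilon.
Set Implicit Arguments. Unset Strict Implicit.

Definition h (c : letter) : letter :=
  match c with La => Lx | Lx => Ly | Ly => Lz | Lz => Lx end.
Fixpoint uf (f i : nat) : letter :=
  match f with 0 => La | S f' => if odd i then h (uf f' i./2) else La end.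
Definition u0 i := uf i.+1 i.

Lemma half_lt i : odd i -> i./2 < i.
Proof. move=> Ho; have := odd_double_half i; rewrite Ho -addnn; lia. Qed.

Lemma uf_stable f g i : i < f -> i < g -> uf f i = uf g i.
Proof.
elim: f g i => [|f IH] [|g] i //= Hf Hg.
case: ifP => // Ho; congr h; apply: IH; have := half_lt Ho; lia.
Qed.

Lemma u0E i : u0 i = if odd i then h (u0 i./2) else La.
Proof.
rewrite {1}/u0 /=; case: ifP => // Ho; congr h; rewrite /u0; apply: uf_stable => //.
exact: half_lt.
Qed.

Lemma u0_2 i : u0 (2 * i) = La.
Proof. by rewrite u0E mul2n odd_double. Qed.

Lemma u0_21 i : u0 (2 * i + 1) = h (u0 i).
Proof.
have Ho : odd (2 * i + 1) by rewrite addn1 /= mul2n odd_double.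
have Hh : (2 * i + 1)./2 = i by rewrite mul2n addnC; exact: (half_bit_double i true).
by rewrite u0E Ho Hh.
Qed.

Lemma h_neq c : h c != La. Proof. by case: c; apply/eqP. Qed.

Lemma u0_odd i : odd i -> u0 i != La.
Proof. by move=> Ho; rewrite u0E Ho h_neq. Qed.
Lemma u0_even i : ~~ odd i -> u0 i = La.
Proof. by move=> Ho; rewrite u0E (negbTE Ho). Qed.

Definition win p L := map u0 (iota p L).

Lemma winD p m n : win p (m + n) = win p m ++ win (p + m) n.
Proof. by rewrite /win iotaD map_cat. Qed.
Lemma size_win p L : size (win p L) = L.
Proof. by rewrite size_map size_iota. Qed.
Lemma nth_win p L j : j < L -> nth La (win p L) j = u0 (p + j).
Proof. by move=> H; rewrite (nth_map 0) ?size_iota // nth_iota. Qed.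

Lemma tau_cat s t : tau (s ++ t) = tau s ++ tau t.
Proof. by rewrite /tau map_cat flatten_cat. Qed.

Lemma tau_win M : tau (win 0 (2 * M + 1)) = win 0 (4 * M + 3).
Proof.
elim: M => [|M IH]; first by rewrite /win /= /u0 /=.
have -> : 2 * M.+1 + 1 = (2 * M + 1) + 2 by lia.
have -> : 4 * M.+1 + 3 = (4 * M + 3) + 4 by lia.
rewrite winD [in RHS]winD tau_cat IH; congr (_ ++ _).
rewrite !add0n.
have -> : win (2 * M + 1) 2 = [:: u0 (2 * M + 1); u0 (2 * (M + 1))].
  by rewrite /win /=; congr [:: _; u0 _]; lia.
have -> : win (4 * M + 3) 4 = [:: u0 (2 * (2 * M + 1) + 1); u0 (2 * (2 * M + 2));
   u0 (2 * (2 * (M + 1)) + 1); u0 (2 * (2 * M + 3))].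
  by rewrite /win /=; congr [:: u0 _; u0 _; u0 _; u0 _]; lia.
rewrite !u0_2 !u0_21 /tau /=.
by rewrite !u0_2; case: (u0 M).
Qed.

Lemma iter_tau_a n : iter n tau [:: La] = win 0 (2 ^ n.+1 - 1).
Proof.
elim: n => [|n IH]; first by rewrite /win /= /u0.
rewrite iterS IH.
have Hp := expn_gt0 2 n.
have -> : 2 ^ n.+1 - 1 = 2 * (2 ^ n - 1) + 1 by rewrite expnS; lia.
rewrite tau_win; congr win; rewrite !expnS; lia.
Qed.

Lemma iter_tau_other c n : c != La -> exists d, iter n tau [:: c] = [:: d].
Proof.
move=> Hc; suff: exists d, iter n tau [:: c] = [:: d] /\ d != La by case=> d [] ? _; exists d.
elim: n => [|n [d [IH Hd]]]; first by exists c.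
rewrite iterS IH; exists (h d); split; last exact: h_neq.
by clear IH; case: d Hd => //; rewrite eqxx.
Qed.

Lemma u0_all c : exists p, u0 p = c.
Proof. by case: c; [exists 0|exists 1|exists 3|exists 7]. Qed.

Lemma win_infix p L N : p + L <= N -> infix (win p L) (win 0 N).
Proof.
move=> H; apply/infixP; exists (win 0 p), (win (p + L) (N - (p + L))).
by rewrite -winD -winD; congr win; lia.
Qed.

Lemma infix_win w p N : infix w (win p N) -> exists q, w = win q (size w).
Proof.
case/infixP=> s [s' E]; exists (p + size s).
have HN : N = size s + (size w + size s') by rewrite -(size_win p N) E !size_cat.
move: E; rewrite HN !winD => /eqP; rewrite eqseq_cat ?size_win // => /andP[_].
by rewrite eqseq_cat ?size_win // => /andP[/eqP E _]; rewrite -E size_win.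
Qed.

Lemma in_SubE w : 0 < size w -> (in_Sub_tau w <-> exists p, w = win p (size w)).
Proof.
move=> Hw; split.
- case=> s [n]; case: (eqVneq s La) => [->|Hs].
    by rewrite iter_tau_a; apply: infix_win.
  case: (iter_tau_other n Hs) => d ->.
  case/infixP=> s1 [s2 E].
  have Hsz : size s1 + size w + size s2 = 1 by rewrite -(size_cat s1) -size_cat -catA -E.
  case: s1 E Hsz => [|? ?] /=; last by lia.
  case: s2 => [|? ?] /=; last by rewrite addnS; lia.
  rewrite cats0 => <- _; case: (u0_all d) => p <-; by exists p.
- case=> p E; exists La, (p + size w).
  rewrite iter_tau_a {1}E; apply: win_infix.
  have := ltn_expl (p + size w) (ltnSn 1); rewrite expnS; lia.
Qed.

Lemma asboolP (P : Prop) : reflect P (asbool P).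
Proof. rewrite /asbool; case: excluded_middle_informative => H; by constructor. Qed.

Definition Fac L : {set L.-tuple letter} := [set t | asbool (exists p, tval t = win p L)].
Definition cF L := #|Fac L|.

Lemma complexityE L : 0 < L -> complexity L = cF L.
Proof.
move=> HL; rewrite /complexity /cF; apply: eq_card => t; rewrite !inE.
apply/asboolP/asboolP; rewrite in_SubE ?size_tuple //.
Qed.

Definition wtup q m : m.-tuple letter := @Tuple m letter (win q m) (introT eqP (size_win q m)).

Lemma wtup_Fac q m : wtup q m \in Fac m.
Proof. by rewrite inE; apply/asboolP; exists q. Qed.

Lemma FacP m t : t \in Fac m -> exists q, t = wtup q m.
Proof. by rewrite inE => /asboolP [q E]; exists q; apply: val_inj. Qed.

Definition G m : {set m.-tuple letter} := [set map_tuple h t | t in Fac m].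

Definition ilvA L m (g : m.-tuple letter) : L.-tuple letter :=
  [tuple (if odd j then nth La g j./2 else La) | j < L].
Definition ilvB L m (g : m.-tuple letter) : L.-tuple letter :=
  [tuple (if odd j then La else nth La g j./2) | j < L].

Lemma u0_2j q j : u0 (2 * q + j) = if odd j then h (u0 (q + j./2)) else La.
Proof.
have E := odd_double_half j; case: (odd j) E => /= E.
  have -> : 2 * q + j = 2 * (q + j./2) + 1 by rewrite -{2}E; lia.
  by rewrite u0_21.
have -> : 2 * q + j = 2 * (q + j./2) by rewrite -{2}E; lia.
by rewrite u0_2.
Qed.

Lemma u0_2j1 q j : u0 (2 * q + 1 + j) = if odd j then La else h (u0 (q + j./2)).
Proof.
have E := odd_double_half j; case: (odd j) E => /= E.
  have -> : 2 * q + 1 + j = 2 * (q + j./2 + 1) by rewrite -{2}E; lia.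
  by rewrite u0_2.
have -> : 2 * q + 1 + j = 2 * (q + j./2) + 1 by rewrite -{2}E; lia.
by rewrite u0_21.
Qed.

Lemma half_lt2 j L : j < L -> j./2 < uphalf L.
Proof.
move=> H; have E1 := odd_double_half j; have E2 := odd_double_half L.
rewrite uphalf_half; move: E1 E2; case: (odd j); case: (odd L) => /=; lia.
Qed.

Lemma half_lt1 j L : j < L -> odd j -> j./2 < L./2.
Proof.
move=> H Ho; have E1 := odd_double_half j; have E2 := odd_double_half L.
move: E1 E2; rewrite Ho; case: (odd L) => /=; lia.
Qed.

Lemma ilvA_win q L (s : (L./2).-tuple letter) :
  tval s = win q L./2 -> ilvA L (map_tuple h s) = wtup (2 * q) L.
Proof.
move=> Es; apply: eq_from_tnth => i; rewrite tnth_mktuple !(tnth_nth La) /=.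
rewrite nth_win // u0_2j; case: ifP => // Ho.
by rewrite (nth_map La) ?size_tuple ?half_lt1 // Es nth_win // half_lt1.
Qed.

Lemma ilvB_win q L (s : (uphalf L).-tuple letter) :
  tval s = win q (uphalf L) -> ilvB L (map_tuple h s) = wtup (2 * q + 1) L.
Proof.
move=> Es; apply: eq_from_tnth => i; rewrite tnth_mktuple !(tnth_nth La) /=.
rewrite nth_win // u0_2j1; case: ifP => // Ho.
by rewrite (nth_map La) ?size_tuple ?half_lt2 // Es nth_win // half_lt2.
Qed.

Definition headA L : {set L.-tuple letter} := [set t : L.-tuple letter | nth La (tval t) 0 == La].

Lemma u0_La p : (u0 p == La) = ~~ odd p.
Proof.
case Ho: (odd p) => /=; first by rewrite (negbTE (u0_odd Ho)).
by rewrite u0_even ?Ho // eqxx.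
Qed.

Lemma phaseA L : 0 < L -> Fac L :&: headA L = @ilvA L L./2 @: G L./2.
Proof.
move=> HL; apply/setP => t; rewrite in_setI [_ \in headA _]inE; apply/idP/idP.
- case/andP=> /FacP [p ->]; rewrite /= nth_win // addn0 u0_La => Hp.
  have Ep : p = 2 * p./2 by have := odd_double_half p; rewrite (negbTE Hp) /=; lia.
  apply/imsetP; exists (map_tuple h (wtup p./2 L./2)).
    by apply/imsetP; exists (wtup p./2 L./2) => //; apply: wtup_Fac.
  by rewrite (@ilvA_win p./2) // -Ep.
- case/imsetP=> g /imsetP [s /FacP [q ->] ->] ->.
  rewrite (@ilvA_win q) // wtup_Fac /= nth_win // addn0 u0_La.
  by rewrite mul2n odd_double.
Qed.

Lemma phaseB L : 0 < L -> Fac L :\: headA L = @ilvB L (uphalf L) @: G (uphalf L).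
Proof.
move=> HL; apply/setP => t; rewrite in_setD [_ \in headA _]inE; apply/idP/idP.
- case/andP=> Hh /FacP [p Et]; move: Hh; rewrite Et /= nth_win // addn0 u0_La negbK => Hp.
  have Ep : p = 2 * p./2 + 1 by have := odd_double_half p; rewrite Hp /=; lia.
  apply/imsetP; exists (map_tuple h (wtup p./2 (uphalf L))).
    by apply/imsetP; exists (wtup p./2 (uphalf L)) => //; apply: wtup_Fac.
  by rewrite (@ilvB_win p./2) // -Ep.
- case/imsetP=> g /imsetP [s /FacP [q ->] ->] ->.
  rewrite (@ilvB_win q) // wtup_Fac /= nth_win // addn0 u0_La andbT negbK.
  by rewrite addn1 /= mul2n odd_double.
Qed.

Lemma ilvA_inj L : injective (@ilvA L L./2).
Proof.
move=> g1 g2 E; apply: eq_from_tnth => i.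
have Hj : (2 * i + 1) < L.
  have := ltn_ord i; have := odd_double_half L; case: (odd L) => /=; lia.
have := congr1 (fun t => tnth t (Ordinal Hj)) E; rewrite !tnth_mktuple /=.
have Ho : odd (2 * i + 1) by rewrite addn1 /= mul2n odd_double.
have Hh : (2 * i + 1)./2 = i by rewrite mul2n addnC; exact: (half_bit_double i true).
by rewrite Ho Hh !(tnth_nth La).
Qed.

Lemma ilvB_inj L : injective (@ilvB L (uphalf L)).
Proof.
move=> g1 g2 E; apply: eq_from_tnth => i.
have Hj : (2 * i) < L.
  have := ltn_ord i; move: (nat_of_ord i) => n; rewrite uphalf_half; have := odd_double_half L; case: (odd L) => /=; lia.
have := congr1 (fun t => tnth t (Ordinal Hj)) E; rewrite !tnth_mktuple /=.
have Ho : odd (2 * i) = false by rewrite mul2n odd_double.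
have Hh : (2 * i)./2 = i by rewrite mul2n; exact: (half_bit_double i false).
by rewrite Ho Hh !(tnth_nth La).
Qed.

Lemma cF_rec L : 0 < L -> cF L = #|G L./2| + #|G (uphalf L)|.
Proof.
move=> HL; rewrite /cF -(cardsID (headA L)) phaseA // phaseB //.
by rewrite (card_imset _ (@ilvA_inj L)) (card_imset _ (@ilvB_inj L)).
Qed.

Lemma hcases c d : h c = h d -> c = d \/ (c = La /\ d = Lz) \/ (c = Lz /\ d = La).
Proof. by case: c; case: d => //=; auto. Qed.

Lemma noz q : odd q -> u0 q = Lz -> u0 (q + 2) = Lz -> False.
Proof.
move=> Ho; have E := odd_double_half q; rewrite Ho /= in E.
have -> : q + 2 = 2 * (q./2 + 1) + 1 by lia.
have Eq : u0 q = u0 (2 * q./2 + 1) by congr u0; lia.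
rewrite Eq !u0_21.
case Hr: (odd q./2).
  have -> : q./2 + 1 = 2 * (q./2 + 1)./2.
    have := odd_double_half (q./2 + 1); rewrite addn1 /= Hr /=; lia.
  by rewrite u0_2 /=; move=> _; discriminate.
by rewrite u0_even ?Hr //=; discriminate.
Qed.

Lemma mismatch q q' : odd q -> ~~ odd q' ->
  h (u0 q) = h (u0 q') -> h (u0 (q + 2)) = h (u0 (q' + 2)) -> False.
Proof.
move=> Ho Ho' E0 E2.
have Hq : u0 q != La by apply: u0_odd.
have Hq2 : u0 (q + 2) != La by apply: u0_odd; rewrite addn2 /= negbK.
have Hq' : u0 q' = La by apply: u0_even.
have Hq2' : u0 (q' + 2) = La by apply: u0_even; rewrite addn2 /= negbK.
rewrite Hq' in E0; rewrite Hq2' in E2.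
apply: (noz Ho).
- by case: (u0 q) Hq E0 => //; rewrite eqxx.
- by case: (u0 (q + 2)) Hq2 E2 => //; rewrite eqxx.
Qed.

Lemma zla : (Lz == La) = false. Proof. by apply/eqP. Qed.

Lemma G_inj m : 2 < m -> {in Fac m &, injective (map_tuple h)}.
Proof.
move=> Hm s1 s2 /FacP [q ->] /FacP [q' ->] E.
have Ej : forall j, j < m -> h (u0 (q + j)) = h (u0 (q' + j)).
  move=> j Hj; have := congr1 (fun t : m.-tuple letter => nth La (tval t) j) E.
  by rewrite /= !(nth_map La) ?size_win // !nth_win.
have E0 := Ej 0 (ltn_trans (isT : 0 < 2) Hm); have E2 := Ej 2 Hm; rewrite !addn0 in E0.
case Hq: (odd q); case Hq': (odd q').
- apply: val_inj; apply: (@eq_from_nth _ La); rewrite ?size_win // => j Hj.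
  rewrite !nth_win //; case: (hcases (Ej j Hj)) => [//|[[H1 H2]|[H1 H2]]].
  + by move: (u0_La (q + j)) (u0_La (q' + j)); rewrite H1 H2 => A B; rewrite ?eqxx ?zla !oddD ?Hq ?Hq' in A B; congruence.
  + by move: (u0_La (q + j)) (u0_La (q' + j)); rewrite H1 H2 => A B; rewrite ?eqxx ?zla !oddD ?Hq ?Hq' in A B; congruence.
- by exfalso; apply: (@mismatch q q'); rewrite ?Hq ?Hq'.
- by exfalso; apply: (@mismatch q' q); rewrite ?Hq ?Hq'.
- apply: val_inj; apply: (@eq_from_nth _ La); rewrite ?size_win // => j Hj.
  rewrite !nth_win //; case: (hcases (Ej j Hj)) => [//|[[H1 H2]|[H1 H2]]].
  + by move: (u0_La (q + j)) (u0_La (q' + j)); rewrite H1 H2 => A B; rewrite ?eqxx ?zla !oddD ?Hq ?Hq' in A B; congruence.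
  + by move: (u0_La (q + j)) (u0_La (q' + j)); rewrite H1 H2 => A B; rewrite ?eqxx ?zla !oddD ?Hq ?Hq' in A B; congruence.
Qed.

Lemma cardG m : 2 < m -> #|G m| = cF m.
Proof. by move=> Hm; rewrite /G card_in_imset //; apply: G_inj. Qed.

Definition lb (c d : letter) : bool :=
  match c, d with La, La | Lx, Lx | Ly, Ly | Lz, Lz => true | _, _ => false end.
Lemma leqE c d : (c == d) = lb c d.
Proof. by case: c; case: d => //=; rewrite ?eqxx //; apply/eqP. Qed.

Lemma G0 : #|G 0| = 1.
Proof.
have -> : G 0 = [set [tuple]].
  apply/setP => t; rewrite inE (tuple0 t) eqxx; apply/imsetP.
  by exists (wtup 0 0); [apply: wtup_Fac | apply: val_inj].
by rewrite cards1.
Qed.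

Lemma G1 : #|G 1| = 3.
Proof.
have -> : G 1 = [tuple Lx] |: ([tuple Ly] |: [set [tuple Lz]]).
  apply/setP => t; apply/idP/idP.
  - case/imsetP=> s /FacP [q ->] ->.
    rewrite !inE -!val_eqE /= !eqseq_cons !leqE.
    by case: (u0 q).
  - rewrite !inE => /or3P [] /eqP ->; apply/imsetP.
    + by exists (wtup 0 1); [apply: wtup_Fac | apply: val_inj].
    + by exists (wtup 1 1); [apply: wtup_Fac | apply: val_inj].
    + by exists (wtup 3 1); [apply: wtup_Fac | apply: val_inj].
by rewrite !cardsU1 cards1 !inE -!val_eqE /= !eqseq_cons !leqE.
Qed.

Lemma G2 : #|G 2| = 5.
Proof.
have -> : G 2 = [tuple Lx; Lx] |: ([tuple Lx; Ly] |: ([tuple Lx; Lz] |: ([tuple Ly; Lx] |: [set [tuple Lz; Lx]]))).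
  apply/setP => t; apply/idP/idP.
  - case/imsetP=> s /FacP [q ->] ->.
    rewrite !inE -!val_eqE /= !eqseq_cons !leqE.
    case Hq: (odd q).
      have H1 : u0 q.+1 = La by apply: u0_even; rewrite /= Hq.
      by rewrite H1; case: (u0 q) (u0_odd Hq) => //=; rewrite eqxx.
    have H0 : u0 q = La by apply: u0_even; rewrite Hq.
    have H1 : u0 q.+1 != La by apply: u0_odd; rewrite /= Hq.
    by rewrite H0; case: (u0 q.+1) H1 => //=; rewrite eqxx.
  - rewrite !inE => /or4P [| | | /orP []] /eqP ->; apply/imsetP.
    + by exists (wtup 6 2); [apply: wtup_Fac | apply: val_inj].
    + by exists (wtup 0 2); [apply: wtup_Fac | apply: val_inj].
    + by exists (wtup 2 2); [apply: wtup_Fac | apply: val_inj].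
    + by exists (wtup 1 2); [apply: wtup_Fac | apply: val_inj].
    + by exists (wtup 3 2); [apply: wtup_Fac | apply: val_inj].
by rewrite !cardsU1 cards1 !inE -!val_eqE /= !eqseq_cons !leqE.
Qed.

Lemma cF1 : cF 1 = 4. Proof. by rewrite cF_rec // G0 G1. Qed.
Lemma cF2 : cF 2 = 6. Proof. by rewrite cF_rec // G1. Qed.
Lemma cF3 : cF 3 = 8. Proof. by rewrite cF_rec // G1 G2. Qed.
Lemma cF4 : cF 4 = 10. Proof. by rewrite cF_rec // G2. Qed.
Lemma cF5 : cF 5 = 13. Proof. by rewrite cF_rec // G2 cardG // cF3. Qed.
Lemma cF6 : cF 6 = 16. Proof. by rewrite cF_rec // cardG // cF3. Qed.
Lemma cF7 : cF 7 = 18. Proof. by rewrite cF_rec // !cardG // cF3 cF4. Qed.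
Lemma cF8 : cF 8 = 20. Proof. by rewrite cF_rec // !cardG // cF4. Qed.

Lemma cF_rec2 L : 5 < L -> cF L = cF L./2 + cF (uphalf L).
Proof.
move=> HL; have E := odd_double_half L.
rewrite cF_rec ?(ltn_trans _ HL) // !cardG //; rewrite ?uphalf_half;
  move: E; case: (odd L) => /=; lia.
Qed.

Definition Q N := forall k, k <= 2 * N ->
  cF (2 * N + k) = if k < N then 5 * N + 3 * k else 6 * N + 2 * k.

Lemma Qbase : Q 2.
Proof.
move=> k Hk; case: k Hk => [|[|[|[|[|]]]]] //= _.
- by rewrite cF4. - by rewrite cF5. - by rewrite cF6. - by rewrite cF7. - by rewrite cF8.
Qed.

Lemma Qstep N : 2 <= N -> Q N -> Q (2 * N).
Proof.
move=> HN IH k Hk.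
have Ek := odd_double_half k.
rewrite cF_rec2; last by lia.
have -> : (2 * (2 * N) + k)./2 = 2 * N + k./2.
  rewrite halfD; have -> : odd (2 * (2 * N)) = false by rewrite mul2n odd_double.
  by rewrite /= mul2n doubleK.
have -> : uphalf (2 * (2 * N) + k) = 2 * N + (odd k + k./2).
  rewrite uphalf_half halfD oddD; have -> : odd (2 * (2 * N)) = false by rewrite mul2n odd_double.
  rewrite /= mul2n doubleK; lia.
rewrite !IH; last 2 first.
- move: Ek; case: (odd k) => /=; lia.
- move: Ek; case: (odd k) => /=; lia.
move: Ek; case: (odd k) => /= Ek; repeat case: ifP; lia.
Qed.

Lemma Qpow j : Q (2 ^ j.+1).
Proof.
elim: j => [|j IH]; first exact: Qbase.
rewrite expnS; apply: Qstep => //.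
by rewrite expnS; have := expn_gt0 2 j; lia.
Qed.

Theorem theorem1 :
  [/\ complexity 1 = 4, complexity 2 = 6, complexity 3 = 8 &
   forall n k : nat, 2 <= n -> k < 2 ^ n ->
     complexity (2 ^ n + k) =
       (if k < 2 ^ n.-1 then 2 ^ n.+1 + 2 ^ n.-1 + 3 * k
        else 2 ^ n.+1 + 2 ^ n + 2 * k)].
Proof.
split; rewrite ?complexityE ?cF1 ?cF2 ?cF3 //.
move=> n k Hn Hk.
have Hp : 0 < 2 ^ n by rewrite expn_gt0.
rewrite complexityE; last by lia.
case: n Hn Hk Hp => [|[|j]] // _ Hk Hp.
have HQ := @Qpow j.
have E1 : 2 ^ j.+2 = 2 * 2 ^ j.+1 by rewrite expnS.
have E2 : 2 ^ j.+3 = 4 * 2 ^ j.+1 by rewrite !expnS; lia.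
rewrite /= E2 E1 HQ; last by lia.
by case: ifP => _; lia.
Qed.
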